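(* Suppose $p_{XY}$ has full support on $\mathcal{X}\times\mathcal{Y}$. Then $(p_{XY},p_{Z|XY})$ is computable with perfect security if and only if for every $y,y'\in\mathcal{Y}$ the following hold: (1) $k(y)=k(y')=:k$ and $\{\vec\alpha_1^{(y)},\dots,\vec\alpha_k^{(y)}\}=\{\vec\alpha_1^{(y')},\dots,\vec\alpha_k^{(y')}\}$; and (2) after indexing the classes so that $\vec\alpha_i^{(y)}=\vec\alpha_i^{(y')}$ for every $i\in[k]$, one has for every $i\in[k]$ and every $x\in\mathcal{X}$: \[\sum_{z\in\mathcal{Z}_i^{(y)}}p_{Z|XY}(z|x,y)=\sum_{z\in\mathcal{Z}_i^{(y')}}p_{Z|XY}(z|x,y').\]
   Context: $\mathcal{X},\mathcal{Y},\mathcal{Z}$ are finite. $(p_{XY},p_{Z|XY})$ is computable with perfect security if there exists a joint p.m.f. $p(u,x,y,z)=p_{XY}(x,y)p_{Z|XY}(z|x,y)p(u|x,y,z)$ (with $U$ on a finite set) satisfying the Markov chains $U-X-Y$, $Z-(U,Y)-X$ and $U-(Y,Z)-X$. For $y\in\mathcal{Y}$ let $\mathcal{Z}^{(y)}=\{z\in\mathcal{Z}:\exists x,\ p_{Z|XY}(z|x,y)>0\}$. For $z,z'\in\mathcal{Z}^{(y)}$, write $z\equiv_y z'$ if the column vectors $(p_{Z|XY}(z|x,y))_{x\in\mathcal{X}}$ and $(p_{Z|XY}(z'|x,y))_{x\in\mathcal{X}}$ are positive scalar multiples of each other; this is an equivalence relation partitioning $\mathcal{Z}^{(y)}=\mathcal{Z}_1^{(y)}\uplus\cdots\uplus\mathcal{Z}_{k(y)}^{(y)}$.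 For each class, the matrix $A_i^{(y)}(x,z)=p_{Z|XY}(z|x,y)$, $(x,z)\in\mathcal{X}\times\mathcal{Z}_i^{(y)}$, is rank one and can be uniquely written as $A_i^{(y)}(x,z)=\vec\alpha_i^{(y)}(x)\vec\gamma_i^{(y)}(z)$ with $\vec\alpha_i^{(y)}$ a probability vector on $\mathcal{X}$. Distinct classes for the same $y$ have distinct $\vec\alpha$'s. *)

(* Defs.v *)
From HB Require Import structures.
From mathcomp Require Import all_boot all_order all_algebra.
From Stdlib Require Import ClassicalEpsilon.
Set Implicit Arguments. Unset Strict Implicit. Unset Printing Implicit Defensive.
Import Order.TTheory GRing.Theory Num.Theory.
Local Open Scope ring_scope.

(* Classical boolean reflection of a proposition (used to form finite sets
   from the Prop-valued equivalence relation of the paper). *)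
Definition asbool (P : Prop) : bool :=
  if excluded_middle_informative P then true else false.

Section Defs.
Variable R : realFieldType.

(* Markov chain A - B - C for a joint p.m.f. P on A x B x C:
   P(a,b,c) P(b) = P(a,b) P(b,c). *)
Definition markov (A B C : finType) (P : A -> B -> C -> R) : Prop :=
  forall a b c,
    P a b c * (\sum_(a' : A) \sum_(c' : C) P a' b c')
    = (\sum_(c' : C) P a b c') * (\sum_(a' : A) P a' b c).

Variables (X Y Z : finType).

(* Standing hypotheses: pXY is a p.m.f. on X x Y, pZ z x y = p_{Z|XY}(z|x,y)
   is a conditional p.m.f. *)
Definition is_pmf2 (pXY : X -> Y -> R) : Prop :=
  (forall x y, 0 <= pXY x y) /\ \sum_(x : X) \sum_(y : Y) pXY x y = 1.

Definition is_cond_pmf (pZ : Z -> X -> Y -> R) : Prop :=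
  (forall z x y, 0 <= pZ z x y) /\ (forall x y, \sum_(z : Z) pZ z x y = 1).

Definition joint (U : finType) (pXY : X -> Y -> R) (pZ : Z -> X -> Y -> R)
  (pU : U -> X -> Y -> Z -> R) (u : U) (x : X) (y : Y) (z : Z) : R :=
  pXY x y * pZ z x y * pU u x y z.

Definition perfectly_secure_computable (pXY : X -> Y -> R) (pZ : Z -> X -> Y -> R)
  : Prop :=
  exists (U : finType) (pU : U -> X -> Y -> Z -> R),
    (forall u x y z, 0 <= pU u x y z) /\
    (forall x y z, \sum_(u : U) pU u x y z = 1) /\
    let J := joint pXY pZ pU in
    (* U - X - Y  (Z marginalised out) *)
    markov (fun (u : U) (x : X) (y : Y) => \sum_(z : Z) J u x y z) /\
    (* Z - (U,Y) - X *)
    markov (fun (z : Z) (uy : U * Y) (x : X) => J uy.1 x uy.2 z) /\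
    (* U - (Y,Z) - X *)
    markov (fun (u : U) (yz : Y * Z) (x : X) => J u x yz.1 yz.2).

Variable pZ : Z -> X -> Y -> R.

Definition suppZ (y : Y) : {set Z} := [set z | [exists x, 0 < pZ z x y]].

Definition equivZ (y : Y) (z z' : Z) : Prop :=
  z \in suppZ y /\ z' \in suppZ y /\
  exists c : R, 0 < c /\ forall x, pZ z x y = c * pZ z' x y.

Definition classZ (y : Y) (z : Z) : {set Z} :=
  [set z' in suppZ y | asbool (equivZ y z' z)].

Definition classes (y : Y) : {set {set Z}} := [set classZ y z | z in suppZ y].

Definition is_alpha (y : Y) (C : {set Z}) (a : X -> R) : Prop :=
  (forall x, 0 <= a x) /\ \sum_(x : X) a x = 1 /\
  exists g : Z -> R, forall x z, z \in C -> pZ z x y = a x * g z.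

End Defs.

(* Main.v *)
Require Import Defs.
From HB Require Import structures.
From mathcomp Require Import all_boot all_order all_algebra.
From mathcomp Require Import ring lra.
From Stdlib Require Import ClassicalEpsilon Classical.
Import Order.TTheory GRing.Theory Num.Theory.
Local Open Scope ring_scope.
Set Implicit Arguments. Unset Strict Implicit.

Lemma asboolP (P : Prop) : asbool P = true <-> P.
Proof. rewrite /asbool; case: excluded_middle_informative => //. Qed.

Lemma sum_gt0_of (R : realDomainType) (I : finType) (F : I -> R) j :
  (forall i, 0 <= F i) -> 0 < F j -> 0 < \sum_i F i.
Proof.
move=> h hj; rewrite (bigD1 j) //=.
have : 0 <= \sum_(i | i != j) F i by apply: sumr_ge0 => i _; exact: h.
lra.
Qed.

Lemma sum_gt0_ex (R : realDomainType) (I : finType) (F : I -> R) :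
  (forall i, 0 <= F i) -> 0 < \sum_i F i -> exists j, 0 < F j.
Proof.
move=> h hs; have: \sum_i F i <> 0 by move=> e; rewrite e ltxx in hs.
by case/psumr_neq0P => [i _|j /andP[_ hj]]; [exact: h|exists j].
Qed.

Lemma sum_le0_0 (R : realDomainType) (I : finType) (F : I -> R) j :
  (forall i, 0 <= F i) -> \sum_i F i = 0 -> F j = 0.
Proof. by move=> h hs; apply: (psumr_eq0P (P:=predT)) => // i _; exact: h. Qed.

Section Gen.
Variable R : realFieldType.
Variable T : finType.

Definition prp (v w : T -> R) := exists c : R, 0 < c /\ forall x, v x = c * w x.

Lemma prp_refl v : prp v v.
Proof. by exists 1; split => // x; rewrite mul1r. Qed.

Lemma prp_sym v w : prp v w -> prp w v.
Proof.
case=> c [c0 h]; exists c^-1; split; first by rewrite invr_gt0.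
move=> x; rewrite h mulrA mulVf ?mul1r //; lra.
Qed.

Lemma prp_trans u v w : prp u v -> prp v w -> prp u w.
Proof.
case=> c [c0 h]; case=> d [d0 h']; exists (c * d); split; first exact: mulr_gt0.
by move=> x; rewrite h h' mulrA.
Qed.

Lemma prp_ext u v w : prp u v -> (forall x, v x = w x) -> prp u w.
Proof. by case=> c [c0 h] e; exists c; split=> // x; rewrite h e. Qed.

Lemma prp_unique v a b : prp v a -> prp v b -> \sum_x a x = 1 -> \sum_x b x = 1 ->
  forall x, a x = b x.
Proof.
case=> c [c0 ha]; case=> d [d0 hb] sa sb.
have cd : c = d.
  have : \sum_x v x = c by rewrite (eq_bigr _ (fun x _ => ha x)) -mulr_sumr sa mulr1.
  have : \sum_x v x = d by rewrite (eq_bigr _ (fun x _ => hb x)) -mulr_sumr sb mulr1.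
  by move=> -> ->.
have dn : d != 0 by rewrite gt_eqF.
by move=> x; have := ha x; rewrite hb cd => /(mulfI dn).
Qed.

End Gen.

Section Cls.
Variable R : realFieldType.
Variables X Y Z : finType.
Variable pZ : Z -> X -> Y -> R.
Hypothesis pZ0 : forall z x y, 0 <= pZ z x y.

Definition col (y : Y) (z : Z) : X -> R := fun x => pZ z x y.

Lemma suppP y z : reflect (exists x, 0 < pZ z x y) (z \in suppZ pZ y).
Proof. by rewrite inE; apply: (iffP existsP). Qed.

Lemma nsupp0 y z x : z \notin suppZ pZ y -> pZ z x y = 0.
Proof.
move=> h; have := pZ0 z x y; rewrite le_eqVlt => /orP[/eqP <- //|hp].
by case/negP: h; apply/suppP; exists x.
Qed.

Lemma in_classZ y z z0 :
  z \in classZ pZ y z0 <-> z \in suppZ pZ y /\ equivZ pZ y z z0.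
Proof. by rewrite inE; split => [/andP[h /asboolP]|[h1 h2]]; [|rewrite h1 /=; apply/asboolP]. Qed.

Lemma classZ_supp y z z0 : z \in classZ pZ y z0 -> z \in suppZ pZ y.
Proof. by case/in_classZ. Qed.

Lemma self_class y z : z \in suppZ pZ y -> z \in classZ pZ y z.
Proof. by move=> h; apply/in_classZ; do 3 split => //; exact: prp_refl. Qed.

Lemma colsum_pos y z : z \in suppZ pZ y -> 0 < \sum_x pZ z x y.
Proof. by case/suppP=> x hx; apply: (sum_gt0_of (j:=x)). Qed.

Lemma classesP y C :
  reflect (exists2 z0, z0 \in suppZ pZ y & C = classZ pZ y z0) (C \in classes pZ y).
Proof. exact: imsetP. Qed.

Lemma alpha_col y C a z : is_alpha pZ y C a -> z \in C ->
  forall x, pZ z x y = a x * \sum_x' pZ z x' y.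
Proof.
case=> _ [sa [g hg]] hz x.
have -> : \sum_x' pZ z x' y = g z.
  by rewrite (eq_bigr _ (fun x' _ => hg x' z hz)) -mulr_suml sa mul1r.
exact: hg.
Qed.

Lemma alpha_prp y C a z : is_alpha pZ y C a -> z \in C -> z \in suppZ pZ y ->
  prp (col y z) a.
Proof.
move=> ha hz hs; exists (\sum_x' pZ z x' y); split; first exact: colsum_pos.
by move=> x; rewrite /col (alpha_col ha hz) mulrC.
Qed.

Lemma prp_alpha y z0 a : (forall x, 0 <= a x) -> \sum_x a x = 1 ->
  z0 \in suppZ pZ y -> prp (col y z0) a -> is_alpha pZ y (classZ pZ y z0) a.
Proof.
move=> a0 sa hs hp; split => //; split => //.
exists (fun z => \sum_x pZ z x y) => x z /in_classZ [_ [_ [_ he]]].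
have hz : prp (col y z) a by apply: prp_trans hp; exact: he.
case: hz => c [c0 hc].
have -> : \sum_x0 pZ z x0 y = c.
  by rewrite (eq_bigr _ (fun x' _ => hc x')) -mulr_sumr sa mulr1.
by rewrite mulrC; exact: hc.
Qed.

Lemma same_alpha_class y z1 z2 a : z1 \in suppZ pZ y -> z2 \in suppZ pZ y ->
  prp (col y z1) a -> prp (col y z2) a -> classZ pZ y z1 = classZ pZ y z2.
Proof.
move=> s1 s2 p1 p2.
have p12 : prp (col y z1) (col y z2) by apply: prp_trans p1 (prp_sym p2).
apply/setP => z; apply/idP/idP => /in_classZ [hz [_ [_ he]]]; apply/in_classZ;
  do 3 split => //.
- by apply: prp_trans p12; exact: he.
- by apply: prp_trans (prp_sym p12); exact: he.
Qed.

Lemma alpha_uniq y C a b : C \in classes pZ y -> is_alpha pZ y C a -> is_alpha pZ y C b ->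
  forall x, a x = b x.
Proof.
case/classesP => z0 s0 -> ha hb.
apply: (prp_unique (alpha_prp ha (self_class s0) s0) (alpha_prp hb (self_class s0) s0)).
  by case: ha => _ [].
by case: hb => _ [].
Qed.

Lemma alpha_class_uniq y C1 C2 a : C1 \in classes pZ y -> C2 \in classes pZ y ->
  is_alpha pZ y C1 a -> is_alpha pZ y C2 a -> C1 = C2.
Proof.
case/classesP => z1 s1 -> /classesP [z2 s2 ->] h1 h2.
exact: (same_alpha_class s1 s2 (alpha_prp h1 (self_class s1) s1)
  (alpha_prp h2 (self_class s2) s2)).
Qed.

Lemma alpha_ext y C a b : is_alpha pZ y C a -> (forall x, a x = b x) -> is_alpha pZ y C b.
Proof.
case=> a0 [sa [g hg]] e; split; first by move=> x; rewrite -e.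
split; first by rewrite -sa; apply: eq_bigr => x _; rewrite e.
by exists g => x z hz; rewrite -e; exact: hg.
Qed.

Lemma exists_alpha y C : C \in classes pZ y -> exists a, is_alpha pZ y C a.
Proof.
case/classesP => z0 s0 ->; have sp := colsum_pos s0.
exists (fun x => pZ z0 x y / \sum_x' pZ z0 x' y).
apply: prp_alpha => //.
- by move=> x; apply: divr_ge0 => //; exact: ltW.
- by rewrite -mulr_suml mulfV // gt_eqF.
- exists (\sum_x' pZ z0 x' y); split => // x; rewrite /col mulrC divfK //.
  by rewrite gt_eqF.
Qed.

End Cls.

Lemma markov_prod (R : realFieldType) (A B C : finType) (P : A -> B -> C -> R) :
  (forall b, exists h : A -> R, exists k : C -> R, forall a c, P a b c = h a * k c) ->
  markov P.
Proof.
move=> H a b c; case: (H b) => h [k hk].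
have s1 : \sum_(a' : A) \sum_(c' : C) P a' b c' = (\sum_a' h a') * (\sum_c' k c').
  rewrite mulr_suml; apply: eq_bigr => a' _; rewrite mulr_sumr.
  by apply: eq_bigr => c' _; exact: hk.
have s2 : \sum_(c' : C) P a b c' = h a * \sum_c' k c'.
  by rewrite mulr_sumr; apply: eq_bigr => c' _; exact: hk.
have s3 : \sum_(a' : A) P a' b c = (\sum_a' h a') * k c.
  by rewrite mulr_suml; apply: eq_bigr => a' _; exact: hk.
rewrite s1 s2 s3 hk; ring.
Qed.

Lemma card_classes_le (R : realFieldType) (X Y Z : finType) (pZ : Z -> X -> Y -> R)
  (pZ0 : forall z x y, 0 <= pZ z x y) y y' :
  (forall C, C \in classes pZ y -> exists2 C', C' \in classes pZ y' &
            exists a : X -> R, is_alpha pZ y C a /\ is_alpha pZ y' C' a) ->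
  (#|classes pZ y| <= #|classes pZ y'|)%N.
Proof.
move=> H.
pose f C := odflt C [pick C' in classes pZ y' |
   asbool (exists a, is_alpha pZ y C a /\ is_alpha pZ y' C' a)].
have hf : forall C, C \in classes pZ y -> f C \in classes pZ y' /\
   exists a, is_alpha pZ y C a /\ is_alpha pZ y' (f C) a.
  move=> C hC; rewrite /f; case: pickP => [C' /andP[h1 /asboolP h2] //|h].
  case: (H C hC) => C' h1 h2; have := h C'; rewrite h1 /=.
  by have -> : asbool (exists a, is_alpha pZ y C a /\ is_alpha pZ y' C' a) = true
    by apply/asboolP.
rewrite -(card_in_imset (f := f)).
  apply: subset_leq_card; apply/subsetP => C' /imsetP [C hC ->].
  by case: (hf C hC).
move=> C1 C2 h1 h2 e.
case: (hf C1 h1) => i1 [a1 [ha1 hb1]]; case: (hf C2 h2) => _ [a2 [ha2 hb2]].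
rewrite -e in hb2.
have eq12 := alpha_uniq pZ0 i1 hb1 hb2.
apply: (alpha_class_uniq pZ0 h1 h2 ha1).
apply: (alpha_ext ha2) => x; by rewrite eq12.
Qed.

Lemma ge0_not_gt0 (R : realDomainType) (t : R) : 0 <= t -> ~ (0 < t) -> t = 0.
Proof. by rewrite le_eqVlt => /orP[/eqP ->|h] // /(_ h). Qed.

Lemma mul_gt0_both (R : realDomainType) (a b : R) : 0 <= a -> 0 <= b -> 0 < a * b ->
  0 < a /\ 0 < b.
Proof.
rewrite !le_eqVlt => /orP[/eqP <-|ha]; first by rewrite mul0r ltxx.
by move=> /orP[/eqP <-|hb]; first by rewrite mulr0 ltxx.
Qed.

Section Forward.
Variable R : realFieldType.
Variables X Y Z U : finType.
Variable pXY : X -> Y -> R.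
Variable pZ : Z -> X -> Y -> R.
Variable pU : U -> X -> Y -> Z -> R.
Hypothesis pZ0 : forall z x y, 0 <= pZ z x y.
Hypothesis pZ1 : forall x y, \sum_z pZ z x y = 1.
Hypothesis pXYpos : forall x y, 0 < pXY x y.
Hypothesis pU0 : forall u x y z, 0 <= pU u x y z.
Hypothesis pU1 : forall x y z, \sum_u pU u x y z = 1.
Let J := joint pXY pZ pU.
Hypothesis m1 : markov (fun (u : U) (x : X) (y : Y) => \sum_(z : Z) J u x y z).
Hypothesis m2 : markov (fun (z : Z) (uy : U * Y) (x : X) => J uy.1 x uy.2 z).
Hypothesis m3 : markov (fun (u : U) (yz : Y * Z) (x : X) => J u x yz.1 yz.2).

Lemma J0 u x y z : 0 <= J u x y z.
Proof. by rewrite /J /joint; apply: mulr_ge0; [apply: mulr_ge0; [exact: ltW|]|]. Qed.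

Lemma sumU_J x y z : \sum_u J u x y z = pXY x y * pZ z x y.
Proof. by rewrite /J /joint -mulr_sumr pU1 mulr1. Qed.

Definition M u x y := \sum_z J u x y z.

Lemma sumU_M x y : \sum_u M u x y = pXY x y.
Proof.
rewrite /M exchange_big /=; under eq_bigr do rewrite sumU_J.
by rewrite -mulr_sumr pZ1 mulr1.
Qed.

Lemma pU_const u x y z : 0 < pZ z x y ->
  pU u x y z = (\sum_x' J u x' y z) / (\sum_x' pXY x' y * pZ z x' y).
Proof.
move=> hz; have := m3 u (y, z) x; rewrite /=.
rewrite (exchange_big _ _ _ _ _ (fun u' x' => J u' x' y z)) /=.
under eq_bigr do rewrite sumU_J.
rewrite sumU_J.
have hQ : 0 < pXY x y * pZ z x y by apply: mulr_gt0.
have hS : 0 < \sum_x' pXY x' y * pZ z x' y.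
  apply: (sum_gt0_of (j := x)) => // x'; apply: mulr_ge0 => //; exact: ltW.
rewrite {1}/J /joint => e.
apply: (mulfI (x := pXY x y * pZ z x y)); first by rewrite gt_eqF.
apply: (mulIf (x := \sum_x' pXY x' y * pZ z x' y)); first by rewrite gt_eqF.
rewrite e; have hn : \sum_x' pXY x' y * pZ z x' y != 0 by rewrite gt_eqF.
field; exact: hn.
Qed.

Lemma L3 u x x' y z : 0 < pZ z x y -> 0 < pZ z x' y -> pU u x y z = pU u x' y z.
Proof. by move=> h h'; rewrite !pU_const. Qed.

Definition qq u x := (\sum_y M u x y) / (\sum_y pXY x y).

Lemma M_qq u x y : M u x y = pXY x y * qq u x.
Proof.
have := m1 u x y; rewrite /= -/(M u x y).
rewrite (exchange_big _ _ _ _ _ (fun u' y' => M u' x y')) /=.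
have -> : \sum_(a' : U) \sum_(c' : Z) J a' x y c' = pXY x y by exact: sumU_M.
under eq_bigr do rewrite sumU_M.
have hS : 0 < \sum_y' pXY x y' by apply: (sum_gt0_of (j := y)) => // y'; exact: ltW.
move=> e; rewrite /qq.
apply: (mulIf (x := \sum_y' pXY x y')); first by rewrite gt_eqF.
rewrite e; have hn : \sum_y' pXY x y' != 0 by rewrite gt_eqF.
field; exact: hn.
Qed.

Lemma qq_sum u x y : qq u x = \sum_z pZ z x y * pU u x y z.
Proof.
apply: (mulfI (x := pXY x y)); first by rewrite gt_eqF.
rewrite -M_qq /M /J /joint mulr_sumr; apply: eq_bigr => z _; by rewrite mulrA.
Qed.

Lemma qq0 u x : 0 <= qq u x.
Proof.
case: (pickP Y) => [y _|h]; last first.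
  by rewrite /qq big_pred0 // mul0r.
by rewrite (qq_sum u x y); apply: sumr_ge0 => z _; apply: mulr_ge0.
Qed.

Lemma K u x0 y z : 0 < pZ z x0 y -> 0 < pU u x0 y z -> prp (col pZ y z) (qq u).
Proof.
move=> hz hu.
have hJ : 0 < J u x0 y z by rewrite /J /joint; do 2 apply: mulr_gt0 => //.
have hW : 0 < \sum_x' J u x' y z by apply: (sum_gt0_of (j := x0)) => // x'; exact: J0.
have hMs : 0 < \sum_x' M u x' y.
  apply: (sum_gt0_of (j := x0)) => [x'|]; first by apply: sumr_ge0 => z' _; exact: J0.
  by apply: (sum_gt0_of (j := z)) => // z'; exact: J0.
have hJe : forall x, J u x y z = pU u x0 y z * (pXY x y * pZ z x y).
  move=> x; rewrite /J /joint mulrC; have := pZ0 z x y.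
  rewrite le_eqVlt => /orP[/eqP <-|hx]; first by rewrite !mulr0.
  by rewrite (L3 u hx hz).
exists ((\sum_x' J u x' y z) / (pU u x0 y z * \sum_x' M u x' y)).
split; first by apply: divr_gt0 => //; apply: mulr_gt0.
move=> x; have := m2 z (u, y) x; rewrite /= -/(M u x y).
rewrite (exchange_big _ _ _ _ _ (fun z' x' => J u x' y z')) /= -!/(M u _ y) M_qq hJe => e.
rewrite /col.
set Ms := \sum_x' M u x' y.
set W := \sum_x' J u x' y z.
have eM : \sum_j \sum_i J u j y i = Ms by [].
rewrite eM in e.
have hp : 0 < pU u x0 y z * Ms * pXY x y by rewrite !mulr_gt0.
apply: (mulfI (x := pU u x0 y z * Ms * pXY x y)); first by rewrite gt_eqF.
have -> : pU u x0 y z * Ms * pXY x y * pZ z x y =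
  pU u x0 y z * (pXY x y * pZ z x y) * Ms by ring.
rewrite e.
have hne : pU u x0 y z * Ms != 0 by rewrite gt_eqF // mulr_gt0.
rewrite -/W; field; by rewrite !gt_eqF.
Qed.


Lemma F1 y y' C : C \in classes pZ y -> exists2 C', C' \in classes pZ y' &
  exists a : X -> R, is_alpha pZ y C a /\ is_alpha pZ y' C' a.
Proof.
case/classesP => z0 s0 ->; have /suppP [x0 hx0] := s0.
have [u hu] : exists u, 0 < pU u x0 y z0.
  by apply: sum_gt0_ex => //; rewrite pU1 ltr01.
have hK := K hx0 hu; have [c [c0 hc]] := hK.
have hq0 : 0 < qq u x0 by rewrite -(pmulr_rgt0 _ c0) -hc.
have hs : 0 < \sum_x qq u x by apply: (sum_gt0_of (j := x0)) => // x; exact: qq0.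
pose a x := qq u x / \sum_x' qq u x'.
have a0 : forall x, 0 <= a x by move=> x; rewrite /a divr_ge0 ?qq0 // ltW.
have sa : \sum_x a x = 1 by rewrite /a -mulr_suml mulfV // gt_eqF.
have pa : forall v, prp v (qq u) -> prp v a.
  move=> v [d [d0 hd]]; exists (d * \sum_x' qq u x'); split; first exact: mulr_gt0.
  move=> x; rewrite hd /a; field; by rewrite gt_eqF.
have [z' hz'] : exists z', 0 < pZ z' x0 y' * pU u x0 y' z'.
  apply: sum_gt0_ex; first by move=> z; apply: mulr_ge0.
  by rewrite -qq_sum.
have [hz1 hz2] : 0 < pZ z' x0 y' /\ 0 < pU u x0 y' z'.
  by apply: mul_gt0_both.
have sz' : z' \in suppZ pZ y' by apply/suppP; exists x0.
exists (classZ pZ y' z'); first exact: imset_f.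
exists a; split.
- apply: prp_alpha => //; exact: pa.
- apply: prp_alpha => //; apply: pa; exact: K hz1 hz2.
Qed.

Lemma F2 y C a x : C \in classes pZ y -> is_alpha pZ y C a ->
  \sum_(z in C) pZ z x y = \sum_u (if asbool (prp a (qq u)) then qq u x else 0).
Proof.
case/classesP => z0 s0 eC ha.
have pa0 : prp (col pZ y z0) a.
  by apply: (alpha_prp pZ0 ha); [rewrite eC; exact: self_class|].
have e1 : \sum_(z in C) pZ z x y = \sum_(z in C) \sum_u pZ z x y * pU u x y z.
  by apply: eq_bigr => z _; rewrite -mulr_sumr pU1 mulr1.
rewrite e1 exchange_big /=; apply: eq_bigr => u _.
case E: (asbool (prp a (qq u))).
- have hp := (proj1 (asboolP _) E).
  rewrite (qq_sum u x y) [in RHS](bigID (mem C)) /=.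
  rewrite [X in _ + X]big1 ?addr0 // => z hz.
  apply: ge0_not_gt0; first by apply: mulr_ge0.
  move=> hpos; have [h1 h2] := mul_gt0_both (pZ0 _ _ _) (pU0 _ _ _ _) hpos.
  have hK := K h1 h2; case/negP: hz; rewrite eC.
  have sz : z \in suppZ pZ y by apply/suppP; exists x.
  apply/in_classZ; split => //; split => //; split => //.
  exact: prp_trans hK (prp_trans (prp_sym hp) (prp_sym pa0)).
- apply: big1 => z hz.
  apply: ge0_not_gt0; first by apply: mulr_ge0.
  move=> hpos; have [h1 h2] := mul_gt0_both (pZ0 _ _ _) (pU0 _ _ _ _) hpos.
  have hK := K h1 h2.
  have hz' : prp (col pZ y z) a by apply: (alpha_prp pZ0 ha hz); apply/suppP; exists x.
  have : asbool (prp a (qq u)) = true by apply/asboolP; exact: prp_trans (prp_sym hz') hK.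
  by rewrite E.
Qed.

Lemma forward y y' :
     (#|classes pZ y| = #|classes pZ y'|
      /\ (forall C, C \in classes pZ y -> exists2 C', C' \in classes pZ y' &
            exists a : X -> R, is_alpha pZ y C a /\ is_alpha pZ y' C' a)
      /\ (forall C', C' \in classes pZ y' -> exists2 C, C \in classes pZ y &
            exists a : X -> R, is_alpha pZ y C a /\ is_alpha pZ y' C' a))
     /\
     (forall C C' (a : X -> R), C \in classes pZ y -> C' \in classes pZ y' ->
        is_alpha pZ y C a -> is_alpha pZ y' C' a ->
        forall x : X, \sum_(z in C) pZ z x y = \sum_(z in C') pZ z x y').
Proof.
split; last by move=> C C' a hC hC' ha ha' x; rewrite (F2 x hC ha) (F2 x hC' ha').
split.
  apply/eqP; rewrite eqn_leq; apply/andP; split; apply: card_classes_le => // C hC.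
    exact: F1.
  by case: (F1 y hC) => C' h1 [a [h2 h3]]; exists C' => //; exists a.
split => [C hC|C' hC']; first exact: F1.
by case: (F1 y hC') => C h1 [a [h2 h3]]; exists C => //; exists a.
Qed.

End Forward.

Section Backward.
Variable R : realFieldType.
Variables X Y Z : finType.
Variable pXY : X -> Y -> R.
Variable pZ : Z -> X -> Y -> R.
Hypothesis pZ0 : forall z x y, 0 <= pZ z x y.
Variable y0 : Y.
Hypothesis H : forall y y' : Y,
     (#|classes pZ y| = #|classes pZ y'|
      /\ (forall C, C \in classes pZ y -> exists2 C', C' \in classes pZ y' &
            exists a : X -> R, is_alpha pZ y C a /\ is_alpha pZ y' C' a)
      /\ (forall C', C' \in classes pZ y' -> exists2 C, C \in classes pZ y &
            exists a : X -> R, is_alpha pZ y C a /\ is_alpha pZ y' C' a))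
     /\
     (forall C C' (a : X -> R), C \in classes pZ y -> C' \in classes pZ y' ->
        is_alpha pZ y C a -> is_alpha pZ y' C' a ->
        forall x : X, \sum_(z in C) pZ z x y = \sum_(z in C') pZ z x y').

Definition phi y z : {set Z} := odflt set0 [pick C0 in classes pZ y0 |
   asbool (exists a, is_alpha pZ y (classZ pZ y z) a /\ is_alpha pZ y0 C0 a)].

Definition pUb (u : {set Z}) (x : X) (y : Y) (z : Z) : R :=
  if u == phi y z then 1 else 0.

Lemma phiP y z : z \in suppZ pZ y -> phi y z \in classes pZ y0 /\
  exists a, is_alpha pZ y (classZ pZ y z) a /\ is_alpha pZ y0 (phi y z) a.
Proof.
move=> hz; have hC : classZ pZ y z \in classes pZ y by exact: imset_f.
rewrite /phi; case: pickP => [C' /andP[h1 /asboolP h2] //|h].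
case: (H y y0) => [[_ [H1 _]] _]; case: (H1 _ hC) => C' h1 h2.
have := h C'; rewrite h1 /=.
by have -> : asbool (exists a, is_alpha pZ y (classZ pZ y z) a /\ is_alpha pZ y0 C' a) = true
    by apply/asboolP.
Qed.

Lemma phi_alpha y z : z \in suppZ pZ y -> exists b, is_alpha pZ y0 (phi y z) b /\
  forall x, pZ z x y = b x * \sum_x' pZ z x' y.
Proof.
move=> hz; case: (phiP hz) => _ [b [h1 h2]]; exists b; split => //.
exact: (alpha_col h1 (self_class hz)).
Qed.

Lemma pUb0 u x y z : 0 <= pUb u x y z.
Proof. by rewrite /pUb; case: eqP. Qed.

Lemma pUb1 x y z : \sum_u pUb u x y z = 1.
Proof.
rewrite (bigD1 (phi y z)) //= /pUb eqxx big1 ?addr0 // => u /negbTE -> //.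
Qed.

Definition Bf (u : {set Z}) x := if u \in classes pZ y0 then \sum_(z in u) pZ z x y0 else 0.

Lemma fib_sum y u x : \sum_z pZ z x y * pUb u x y z = Bf u x.
Proof.
rewrite /Bf; case: ifP => hu; last first.
  apply: big1 => z _; case: (boolP (z \in suppZ pZ y)) => hz; last first.
    by rewrite nsupp0 // mul0r.
  case: (phiP hz) => h1 _; rewrite /pUb; case: eqP => [e|]; last by rewrite mulr0.
  by rewrite -e hu in h1.
have [a ha] := exists_alpha pZ0 hu.
case: (H y y0) => [[_ [_ H2]] H3].
case: (H2 _ hu) => C hC [a' [ha1 ha2]].
rewrite -(H3 _ _ _ hC hu ha1 ha2 x).
have key : forall z, z \in suppZ pZ y -> (u == phi y z) = (z \in C).
  move=> z hz; case: (phiP hz) => hp [b [hb1 hb2]].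
  apply/idP/idP => [/eqP e|zC].
  - rewrite -e in hb2; have eb := alpha_uniq pZ0 hu hb2 ha2.
    have hcz : classZ pZ y z \in classes pZ y by exact: imset_f.
    have := alpha_class_uniq pZ0 hcz hC (alpha_ext hb1 eb) ha1.
    by move <-; exact: self_class.
  - have pz : prp (col pZ y z) a' by exact: (alpha_prp pZ0 ha1 zC hz).
    have ha3 : is_alpha pZ y (classZ pZ y z) a'.
      by case: ha1 => a0 [sa _]; apply: prp_alpha.
    have hcz : classZ pZ y z \in classes pZ y by exact: imset_f.
    have eb := alpha_uniq pZ0 hcz hb1 ha3.
    by apply/eqP; apply: (alpha_class_uniq pZ0 hu hp ha2); exact: (alpha_ext hb2 eb).
rewrite [RHS]big_mkcond /=; apply: eq_bigr => z _.
case: (boolP (z \in suppZ pZ y)) => hz; last first.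
  by rewrite nsupp0 // mul0r; case: ifP.
rewrite /pUb key //; case: ifP => _; by rewrite ?mulr1 ?mulr0.
Qed.

Lemma back_psc : perfectly_secure_computable pXY pZ.
Proof.
exists _, pUb; split; first exact: pUb0.
split; first exact: pUb1.
cbv zeta; split; [|split].
- apply: markov_prod => x; exists (fun u => Bf u x), (fun y => pXY x y) => u y.
  rewrite -(fib_sum y u x) mulrC mulr_sumr; apply: eq_bigr => z _.
  by rewrite /joint mulrA.
- apply: markov_prod => -[u y] /=.
  case: (classic (exists z1, z1 \in suppZ pZ y /\ phi y z1 = u)) => [[z1 [s1 e1]]|hn].
  + have [b1 [hb1 _]] := phi_alpha s1.
    exists (fun z => if (z \in suppZ pZ y) && (phi y z == u) then \sum_x' pZ z x' y else 0).
    exists (fun x => pXY x y * b1 x) => z x.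
    rewrite /joint /pUb.
    case: (boolP (z \in suppZ pZ y)) => hz /=; last by rewrite nsupp0 // !mulr0 !mul0r.
    rewrite eq_sym; case: eqP => e; last by rewrite mulr0 mul0r.
    have [b [hb he]] := phi_alpha hz.
    rewrite e -e1 in hb.
    have eb := alpha_uniq pZ0 (proj1 (phiP s1)) hb hb1.
    rewrite he eb mulr1; ring.
  + exists (fun _ => 0), (fun _ => 0) => z x; rewrite mul0r /joint /pUb.
    case: (boolP (z \in suppZ pZ y)) => hz; last by rewrite nsupp0 // !mulr0 !mul0r.
    case: eqP => e; last by rewrite mulr0.
    by case: hn; exists z.
- apply: markov_prod => -[y z] /=.
  exists (fun u => if u == phi y z then 1 else 0), (fun x => pXY x y * pZ z x y) => u x.
  by rewrite /joint mulrC.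
Qed.

End Backward.

Theorem theorem3 (R : realFieldType) (X Y Z : finType)
  (pXY : X -> Y -> R) (pZ : Z -> X -> Y -> R) :
  is_pmf2 pXY -> is_cond_pmf pZ ->
  (forall x y, 0 < pXY x y) ->
  perfectly_secure_computable pXY pZ <->
  (forall y y' : Y,
     (* (1) k(y) = k(y') and equal sets of alpha vectors *)
     (#|classes pZ y| = #|classes pZ y'|
      /\ (forall C, C \in classes pZ y -> exists2 C', C' \in classes pZ y' &
            exists a : X -> R, is_alpha pZ y C a /\ is_alpha pZ y' C' a)
      /\ (forall C', C' \in classes pZ y' -> exists2 C, C \in classes pZ y &
            exists a : X -> R, is_alpha pZ y C a /\ is_alpha pZ y' C' a))
     /\
     (* (2) classes with the same alpha have the same column sums *)
     (forall C C' (a : X -> R), C \in classes pZ y -> C' \in classes pZ y' ->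
        is_alpha pZ y C a -> is_alpha pZ y' C' a ->
        forall x : X, \sum_(z in C) pZ z x y = \sum_(z in C') pZ z x y')).
Proof.
move=> [pXY0 sXY] [pZ0 pZ1] hpos; split.
- case=> U [pU [pU0 [pU1 [m1 [m2 m3]]]]] y y'.
  exact: (forward pZ0 pZ1 hpos pU0 pU1 m1 m2 m3).
- move=> H; case: (pickP Y) => [y0 _|h]; first exact: (back_psc pXY pZ0 y0 H).
  exfalso; have : \sum_x \sum_y pXY x y = 0.
    by apply: big1 => x _; apply: big_pred0 => y; exact: h.
  by rewrite sXY => /eqP; rewrite oner_eq0.
Qed.
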